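(* Let $n\ge 2$, $a,b,c\in\mathbb{Z}_n$, and suppose $(\mathbb{Z}_n,* )$ with $x*y=ax+by+c$ is a quasigroup. Then, for $1\le k<n$, $(\mathbb{Z}_n,* )$ is $k$-translatable with respect to the ordering $0,1,\dots,n-1$ if and only if $a+kb\equiv 0\pmod n$.
   Context: A finite groupoid with ordering $q_1,\dots,q_n$ is $k$-translatable ($1\le k<n$) with respect to this ordering if $q_i* q_j=q_{i-1}* q_{j-k}$ for all $i\in\{2,\dots,n\}$, $j\in\{1,\dots,n\}$, indices taken modulo $n$ in $\{1,\dots,n\}$ (each Cayley-table row is the previous row with its last $k$ entries moved to the front). *)

(* Defs.v *)
From mathcomp Require Import ssreflect ssrfun ssrbool eqtype ssrnat seq choice fintype div.
Set Implicit Arguments. Unset Strict Implicit. Unset Printing Implicit Defensive.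

(* A finite groupoid on {0,...,n-1} (= 'I_n), with the ordering
   q_1, ..., q_n given by q_i = i - 1.  We use 0-based indices. *)

Definition is_quasigroup (T : finType) (op : T -> T -> T) : Prop :=
  forall u v : T, (exists! x, op u x = v) /\ (exists! y, op y u = v).

(* k-translatable w.r.t. the ordering q_1 = 0, ..., q_n = n-1:
   q_i * q_j = q_{i-1} * q_{j-k} for i in {2..n}, j in {1..n}, indices mod n. *)
Definition k_translatable (n k : nat) (op : 'I_n -> 'I_n -> 'I_n) : Prop :=
  forall (i j : 'I_n) (i' j' : 'I_n),
    0 < i -> nat_of_ord i' = i.-1 -> nat_of_ord j' = (j + n - k) %% n ->
    op i j = op i' j'.

Definition lin_op (n : nat) (Hn : 0 < n) (a b c : 'I_n) (x y : 'I_n) : 'I_n :=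
  Ordinal (ltn_pmod (a * x + b * y + c) Hn).

(* Main.v *)
Require Import Defs.
From mathcomp Require Import ssreflect ssrfun ssrbool eqtype ssrnat seq choice fintype div.
From mathcomp Require Import zify.

Lemma helper (n b k j : nat) : k <= n ->
  b * ((j + n - k) %% n) + k * b = b * j %[mod n].
Proof.
move=> kn.
rewrite -modnDml modnMmr modnDml.
have -> : b * (j + n - k) + k * b = b * j + b * n.
  rewrite mulnBr [k * b]mulnC subnK ?mulnDr //.
  by rewrite -mulnDr leq_mul2l (leq_trans kn) ?leq_addl ?orbT.
by rewrite addnC modnMDl.
Qed.

Lemma keyeq (n a b c k p j : nat) : k <= n ->
  (a + k * b) %% n = 0 ->
  (a * p.+1 + b * j + c) %% n = (a * p + b * ((j + n - k) %% n) + c) %% n.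
Proof.
move=> kn H.
apply/eqP; rewrite -(eqn_modDr (k*b)); apply/eqP.
have -> : a * p.+1 + b * j + c + k * b = (a * p + b * j + c) + (a + k * b).
  by rewrite mulnS; lia.
rewrite -modnDmr H addn0.
have -> : a * p + b * ((j + n - k) %% n) + c + k * b = (a * p + c) + (b * ((j + n - k) %% n) + k * b).
  by lia.
rewrite -[in RHS]modnDmr helper // modnDmr.
by congr (_ %% _); lia.
Qed.

Lemma keyrev (n a b c k : nat) : 0 < k < n ->
  (a * 1 + b * 0 + c) %% n = (a * 0 + b * ((0 + n - k) %% n) + c) %% n ->
  (a + k * b) %% n = 0.
Proof.
case/andP=> k0 kn => H.
have /eqP : (a * 1 + b * 0 + c) + k * b = (a * 0 + b * ((0 + n - k) %% n) + c) + k * b %[mod n].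
  by rewrite -modnDml H modnDml.
have -> : a * 0 + b * ((0 + n - k) %% n) + c + k * b = c + (b * ((0 + n - k) %% n) + k * b) by lia.
rewrite -[X in _ == X]modnDmr helper; last exact: ltnW.
rewrite modnDmr.
have -> : a * 1 + b * 0 + c + k * b = (a + k * b) + c by lia.
have -> : c + b * 0 = 0 + c by lia.
by rewrite eqn_modDr mod0n => /eqP.
Qed.

Theorem lemma9p1 (n : nat) (Hn2 : 2 <= n) (a b c : 'I_n) (k : nat) :
  let Hn : 0 < n := ltnW Hn2 in
  is_quasigroup (lin_op Hn a b c) ->
  1 <= k < n ->
  (k_translatable k (lin_op Hn a b c) <-> (a + k * b) %% n = 0).
Proof.
move=> Hn _ hk; split.
- move=> T.
  have h1 : 1 < n := Hn2.
  have h0 : 0 < n := Hn.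
  have hj : (0 + n - k) %% n < n by rewrite ltn_mod.
  have := T (Ordinal h1) (Ordinal h0) (Ordinal h0) (Ordinal hj) isT erefl erefl.
  move=> /(congr1 val) /= E.

  exact (@keyrev n a b c k hk E).
- move=> H i j i' j' ipos Ei Ej.
  apply: val_inj => /=.
  rewrite Ej Ei.
  have -> : nat_of_ord i = (i.-1).+1 by rewrite prednK.
  apply: keyeq => //.
  exact: ltnW (andP hk).2.
Qed.
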